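(* Let $q$ be a prime power and let $\mathcal{F}=(\mathcal{F}_1,\ldots,\mathcal{F}_r)$ be a flag of type $(t_1,\ldots,t_r)$ on $\mathbb{F}_{q^n}$. Assume $m$ is a divisor of $n$ with $m=t_i$ for some $i\in\{1,\ldots,r\}$. If $|\mathrm{Orb}(\mathcal{F})|=\frac{q^n-1}{q^m-1}$, then $m=t_1$, the code $\mathrm{Orb}(\mathcal{F}_1)$ equals $\mathrm{Orb}(\mathbb{F}_{q^m})=\{\mathbb{F}_{q^m}\gamma:\gamma\in\mathbb{F}_{q^n}^*\}$ (the $m$-spread of $\mathbb{F}_{q^n}$ formed by the multiplicative translates of the subfield $\mathbb{F}_{q^m}$), and $m$ divides $t_j$ for every $j\in\{1,\ldots,r\}$.
   Context: $\mathbb{F}_{q^n}$ is regarded as an $\mathbb{F}_q$-vector space. A flag of type $(t_1,\ldots,t_r)$ on $\mathbb{F}_{q^n}$ is a sequence $(\mathcal{F}_1,\ldots,\mathcal{F}_r)$ of $\mathbb{F}_q$-subspaces with $\{0\}\subsetneq\mathcal{F}_1\subsetneq\cdots\subsetneq\mathcal{F}_r\subsetneq\mathbb{F}_{q^n}$ and $\dim_{\mathbb{F}_q}\mathcal{F}_i=t_i$. For $\gamma\in\mathbb{F}_{q^n}^*$, $\mathcal{U}\gamma=\{u\gamma:u\in\mathcal{U}\}$ and $\mathcal{F}\gamma=(\mathcal{F}_1\gamma,\ldots,\mathcal{F}_r\gamma)$. The cyclic orbit codes are $\mathrm{Orb}(\mathcal{U})=\{\mathcal{U}\gamma:\gamma\in\mathbb{F}_{q^n}^*\}$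 and $\mathrm{Orb}(\mathcal{F})=\{\mathcal{F}\gamma:\gamma\in\mathbb{F}_{q^n}^*\}$. An $m$-spread of $\mathbb{F}_{q^n}$ is a set of $m$-dimensional $\mathbb{F}_q$-subspaces that pairwise intersect in $\{0\}$ and whose union is $\mathbb{F}_{q^n}$. *)

(* Defs.v *)
From HB Require Import structures.
From mathcomp Require Import all_boot all_order all_algebra all_field.
Set Implicit Arguments. Unset Strict Implicit. Unset Printing Implicit Defensive.
Import GRing.Theory.
Local Open Scope ring_scope.

(* F = F_q (a finite field), L = F_{q^n} regarded as a finite-dimensional
   F-vector space (fieldExtType F).  Subspaces are {vspace L}. *)
Section Defs.
Variables (F : finFieldType) (L : fieldExtType F).

Definition vsmul (U : {vspace L}) (g : L) : {vspace L} := (U * <[g]>)%VS.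

(* a flag is a seq [:: F_1; ...; F_r] of subspaces with
   {0} < F_1 < ... < F_r < L (strict inclusions), r >= 1 *)
Definition strict_sub (U V : {vspace L}) : bool := (U <= V)%VS && (U != V).

Definition is_flag (Fl : seq {vspace L}) : bool :=
  [&& (0 < size Fl)%N, path strict_sub 0%VS Fl & strict_sub (last 0%VS Fl) fullv].

Definition flag_type (Fl : seq {vspace L}) : seq nat := map (fun U => \dim U) Fl.

Definition flag_mul (Fl : seq {vspace L}) (g : L) : seq {vspace L} :=
  map (fun U => vsmul U g) Fl.

(* Orb(U) and Orb(F), as duplicate-free lists (gamma ranges over F_{q^n}^* ) *)
Definition orb_space (U : {vspace L}) : seq {vspace L} :=
  undup [seq vsmul U (g : L) | g <- enum (finvect_type L) & g != 0].

Definition orb_flag (Fl : seq {vspace L}) : seq (seq {vspace L}) :=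
  undup [seq flag_mul Fl (g : L) | g <- enum (finvect_type L) & g != 0].

End Defs.

(* Main.v *)
Require Import Defs.
From HB Require Import structures.
From mathcomp Require Import all_boot all_order all_algebra all_field.
Set Implicit Arguments. Unset Strict Implicit. Unset Printing Implicit Defensive.
Import GRing.Theory.
Local Open Scope ring_scope.
Section S.
Variables (F : finFieldType) (L : fieldExtType F).
Local Notation T := (finvect_type L).

Lemma vsmul1 (U : {vspace L}) : vsmul U 1 = U.
Proof. exact: prodv1. Qed.

Lemma vsmulM (U : {vspace L}) g h : vsmul (vsmul U g) h = vsmul U (g * h).
Proof. by rewrite /vsmul -prodvA prodv_line. Qed.

Lemma flag_mul1 (Fl : seq {vspace L}) : flag_mul Fl 1 = Fl.
Proof. by rewrite /flag_mul (eq_map (@vsmul1)) map_id. Qed.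

Lemma flag_mulM (Fl : seq {vspace L}) g h :
  flag_mul (flag_mul Fl g) h = flag_mul Fl (g * h).
Proof. by rewrite /flag_mul -map_comp; apply: eq_map => U /=; rewrite vsmulM. Qed.

Lemma vsmul_img (U : {vspace L}) g : vsmul U g = (amulr g @: U)%VS.
Proof.
apply: subv_anti; apply/andP; split.
  apply/prodvP => u v Uu /vlineP[a ->].
  have -> : u * (a *: g) = amulr g (a *: u) by rewrite lfunE /= -scalerAl -scalerAr.
  exact: memv_img (memvZ _ Uu).
apply/subvP => x /memv_imgP[u Uu ->]; rewrite lfunE /=.
by rewrite memv_mul ?memv_line.
Qed.

Lemma dim_vsmul (U : {vspace L}) g : g != 0 -> \dim (vsmul U g) = \dim U.
Proof.
move=> nz; rewrite vsmul_img limg_dim_eq //.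
by rewrite (eqP (lker0_amulr _)) ?capv0 ?unitfE.
Qed.

Lemma vsmul_eq (U : {vspace L}) g : g != 0 ->
  (vsmul U g == U) = (vsmul U g <= U)%VS.
Proof. by move=> nz; rewrite eqEdim dim_vsmul // leqnn andbT. Qed.

Definition stabU (U : {vspace L}) : {vspace L} :=
  (\bigcap_(u : T | (u : L) \in U) (amull (u : L) @^-1: U))%VS.

Lemma mem_stabU U x : (x \in stabU U) = (vsmul U x <= U)%VS.
Proof.
apply/idP/idP.
  rewrite memvE => /subv_bigcapP H.
  apply/prodvP => u v Uu /vlineP[a ->].
  have := H u Uu; rewrite -memvE -memv_preim lfunE /= => Hu.
  by rewrite -scalerAr memvZ.
move=> H; rewrite memvE; apply/subv_bigcapP => u Uu.
by rewrite -memvE -memv_preim lfunE /= (subvP H) // memv_mul ?memv_line.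
Qed.

Definition stabE (Fl : seq {vspace L}) : {vspace L} :=
  foldr (fun U E => stabU U :&: E)%VS fullv Fl.

Lemma mem_stabE Fl x : (x \in stabE Fl) = all (fun U => vsmul U x <= U)%VS Fl.
Proof.
elim: Fl => [|U Fl IH] /=; first by rewrite memvf.
apply/memv_capP/andP; rewrite IH mem_stabU; case => //.
Qed.

Lemma stabE_aspace Fl : is_aspace (stabE Fl).
Proof.
apply/andP; split.
  apply: has_algid1; rewrite mem_stabE; apply/allP => U _.
  by rewrite vsmul1.
apply/prodvP => x y; rewrite !mem_stabE => /allP Hx /allP Hy.
apply/allP => U UF; rewrite -vsmulM.
apply: subv_trans (Hy U UF); exact: prodvSl (Hx U UF).
Qed.

Definition stabK Fl : {subfield L} := ASpace (stabE_aspace Fl).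


Lemma count_enumT (P : pred T) : count P (enum T) = #|P|.
Proof.
rewrite cardE /enum_mem size_filter count_filter; apply: eq_count => x.
by rewrite /= andbT.
Qed.

Definition Stab (Fl : seq {vspace L}) := [pred g : T | (g != 0) && (flag_mul Fl g == Fl)].

Lemma card_fiber (Fl : seq {vspace L}) (h : T) : h != 0 ->
  #|[pred g : T | (g != 0) && (flag_mul Fl g == flag_mul Fl h)]| = #|Stab Fl|.
Proof.
move=> nzh.
rewrite -(card_image (mulIf nzh) (Stab Fl)).
apply: eq_card => g; rewrite inE /=.
apply/andP/imageP.
  case=> nzg /eqP efg; exists (g * h^-1); last by rewrite mulfVK.
  rewrite inE /= mulf_neq0 ?invr_eq0 //= -flag_mulM efg flag_mulM mulfV //.
  by rewrite flag_mul1.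
case=> x; rewrite inE /= => /andP[nzx /eqP ex] ->; split.
  by rewrite mulf_neq0.
by rewrite -flag_mulM ex.
Qed.

Lemma orb_count (Fl : seq {vspace L}) :
  (size (orb_flag Fl) * #|Stab Fl| = #|T|.-1)%N.
Proof.
set f := flag_mul Fl.
set l := [seq g <- enum T | g != 0].
have -> : orb_flag Fl = undup (map f l) by [].
have sl : size (map f l) = #|T|.-1.
  by rewrite size_map size_filter count_enumT -(cardC1 0).
rewrite -sl -(perm_size (perm_count_undup (map f l))) size_flatten /shape -map_comp.
have -> : [seq (size \o (fun x => nseq (count_mem x (map f l)) x)) i | i <- undup (map f l)]
   = nseq (size (undup (map f l))) #|Stab Fl|.
  have -> : undup (map f l) = [seq y | y <- undup (map f l)] by rewrite map_id.
  rewrite -map_comp.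
  have : {in undup (map f l), forall y, size (nseq (count_mem y (map f l)) y) = #|Stab Fl|}.
    move=> y; rewrite mem_undup size_nseq => /mapP[h]; rewrite mem_filter => /andP[nzh _] ->.
    rewrite count_map -(@card_fiber Fl h nzh) /l count_filter count_enumT.
    by apply: eq_card => g; rewrite !inE /= andbC eq_sym.
  elim: (undup (map f l)) => //= y r IH H.
  by rewrite H ?mem_head // IH // => z zr; rewrite H // in_cons zr orbT.
by rewrite sumn_nseq mulnC.
Qed.

Lemma flag_mul_eq Fl (g : L) : g != 0 -> (flag_mul Fl g == Fl) = (g \in stabE Fl).
Proof.
move=> nzg; rewrite mem_stabE; elim: Fl => //= U Fl IH.
by rewrite eqseq_cons IH vsmul_eq.
Qed.

Lemma card_Stab Fl : #|Stab Fl| = (#|F| ^ \dim (stabE Fl)).-1.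
Proof.
rewrite -(@card_vspace F T _ (stabE Fl)) [in RHS](cardD1 0) mem0v add1n /=.
apply: eq_card => g; rewrite !inE /=.
by case: (eqVneq g 0) => //= nzg; rewrite flag_mul_eq.
Qed.

Lemma stabE_mul Fl U : U \in Fl -> ((stabE Fl : {vspace L}) * U <= U)%VS.
Proof.
move=> UF; apply/prodvP => e u Ee Uu; rewrite mulrC.
move: Ee; rewrite mem_stabE => /allP/(_ U UF) H.
by rewrite (subvP H) // memv_mul ?memv_line.
Qed.

Lemma strict_sub_trans : transitive (@strict_sub F L).
Proof.
move=> V U W /andP[sUV nUV] /andP[sVW nVW]; rewrite /strict_sub (subv_trans sUV sVW).
apply/eqP => eUW; move: nUV; rewrite eqEsubv sUV /= eUW sVW //.
Qed.


Lemma cardT : #|T| = (#|F| ^ \dim {:L})%N.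
Proof. by rewrite -(@card_vspace F T _ fullv); apply: eq_card => x; rewrite memvf. Qed.

Lemma orb_space_vsmul (U : {vspace L}) (u : L) : u != 0 ->
  orb_space (vsmul U u) =i orb_space U.
Proof.
move=> nzu V; rewrite /orb_space !mem_undup; apply/mapP/mapP => -[g];
  rewrite mem_filter => /andP[nzg _] ->.
  exists (u * g : T); last by rewrite vsmulM.
  by rewrite mem_filter mulf_neq0 //= (mem_enum (finvect_type L)).
exists (u^-1 * g); last by rewrite vsmulM mulrA mulfV ?mul1r.
by rewrite mem_filter mulf_neq0 ?invr_eq0 //= (mem_enum (finvect_type L)).
Qed.

End S.

Theorem corollary3p11 (F : finFieldType) (L : fieldExtType F) (q n m : nat)
    (Fl : seq {vspace L}) :
  #|F| = q -> \dim {: L}%VS = n ->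
  is_flag Fl ->
  (m %| n)%N -> m \in flag_type Fl ->
  size (orb_flag Fl) = ((q ^ n - 1) %/ (q ^ m - 1))%N ->
  [/\ m = head 0%N (flag_type Fl),
      (forall K : {subfield L}, \dim K = m ->
         orb_space (head 0%VS Fl) =i orb_space (K : {vspace L}))
    & forall j, j \in flag_type Fl -> (m %| j)%N].
Proof.
move=> Hq Hn Hfl Hmn HmT Horb.
have q1 : (1 < q)%N by rewrite -Hq finNzRing_gt1.
case/and3P: Hfl => _ Hpath _.
have Hpos : forall U, U \in Fl -> (0 < \dim U)%N.
  move=> U UF; have /allP/(_ U UF)/andP[_] := order_path_min (@strict_sub_trans F L) Hpath.
  by rewrite lt0n dimv_eq0 eq_sym.
have Hdiv : forall U, U \in Fl -> (\dim (stabE Fl) %| \dim U)%N.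
  by move=> U UF; exact: (@field_module_dimS _ _ (stabK Fl) U (stabE_mul UF)).
case/mapP: (HmT) => U0 U0F Em.
have m0 : (0 < m)%N by rewrite Em Hpos.
have n0 : (0 < n)%N by rewrite -Hn adim_gt0.
have key : \dim (stabE Fl) = m.
  have h1 := orb_count Fl.
  rewrite card_Stab Horb cardT Hq Hn in h1.
  have dv : (q ^ m - 1 %| q ^ n - 1)%N.
    case/dvdnP: Hmn => k ->; rewrite mulnC expnM -{2}(exp1n k) subn_exp.
    exact: dvdn_mulr.
  have hA := divnK dv.
  move: h1 hA; set A := (_ %/ _)%N => h1 hA.
  have qn : (1 < q ^ n)%N by rewrite -(expn0 q) ltn_exp2l.
  have qm : (1 < q ^ m)%N by rewrite -(expn0 q) ltn_exp2l.
  have qd : (0 < q ^ \dim (stabE Fl))%N by rewrite expn_gt0 (ltnW q1).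
  have A0 : (0 < A)%N.
    by rewrite lt0n; apply/eqP => A0; move: hA; rewrite A0 mul0n => /eqP; rewrite eq_sym subn_eq0 leqNgt qn.
  have : (A * (q ^ \dim (stabE Fl)).-1 = A * (q ^ m - 1))%N by rewrite h1 hA subn1.
  move/eqP; rewrite eqn_pmul2l // -subn1 => /eqP e.
  apply: (expnI q1).
  by rewrite -(subnK qd) -(subnK (ltnW qm)) e.
have Hm : forall U, U \in Fl -> (m %| \dim U)%N by move=> U UF; rewrite -key Hdiv.
case: Fl Hpath HmT Hpos Hdiv Hm U0F key {Horb} => [|U1 rest] //= /andP[_ Hpath] HmT Hpos Hdiv Hm U0F key.
have eU1 : m = \dim U1.
  apply/eqP; rewrite eqn_leq dvdn_leq ?Hpos ?Hm ?mem_head //= Em.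
  move: U0F; rewrite in_cons => /orP[/eqP -> //|U0r].
  have /allP/(_ U0 U0r)/andP[+ _] := order_path_min (@strict_sub_trans F L) Hpath.
  exact: dimvS.
split => //.
- move=> K dK.
  have eK : (K : {vspace L}) = stabE (U1 :: rest).
    apply/vspaceP => x.
    rewrite (Fermat's_little_theorem K x) (Fermat's_little_theorem (stabK (U1::rest)) x).
    by rewrite /= dK key.
  have nz1 : U1 != 0%VS by rewrite -dimv_eq0 -lt0n Hpos ?mem_head.
  set u := vpick U1.
  have nzu : u != 0 by rewrite vpick0.
  have eU : vsmul (stabE (U1::rest)) u = U1.
    apply/eqP; rewrite eqEdim dim_vsmul // key -eU1 leqnn andbT.
    apply/prodvP => e v Ee /vlineP[a ->].
    apply: (subvP (stabE_mul (mem_head U1 rest))); rewrite memv_mul // memvZ // memv_pick //.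
  by move=> V; rewrite -eU orb_space_vsmul // eK.
- move=> j; rewrite in_cons => /orP[/eqP -> | /mapP[U UF ->]]; apply: Hm; rewrite ?mem_head // in_cons UF orbT //.
Qed.
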